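(* Let $G$ be a directed clique on $[n]$ and $W$ any (nondegenerate) CTLN $W(G,\varepsilon,\delta)$ with legal parameters. Then $\operatorname{FP}(W)=\{\sigma\}$, where $\sigma$ is the unique target-free clique of $G$. In particular, a directed clique is a stable motif if and only if it is a clique.
   Context: $G$ is a simple directed graph. $G$ is a directed clique if its nodes can be ordered $1,\dots,n$ so that $i\to j$ whenever $i<j$ (no constraint on back edges). A clique is a set of nodes pairwise bidirectionally connected; a target of $\sigma$ is $k\notin\sigma$ with $i\to k$ for all $i\in\sigma$; target-free means no target. Legal parameters: $\delta>0$, $0<\varepsilon<\frac{\delta}{\delta+1}$. $W(G,\varepsilon,\delta)$ has $W_{ii}=0$, $W_{ij}=-1+\varepsilon$ if $j\to i$, $W_{ij}=-1-\delta$ if $i\ne j$, $j\not\to i$; dynamics $\dot x_i=-x_i+[\sum_jW_{ij}x_j+\theta]_+$, $\theta>0$; nondegenerate means $\det(I-W_\sigma)\ne0$ and all Cramer determinants for $(I-W_\sigma)x=\theta 1_\sigma$ nonzero. $\operatorname{FP}(W)$ is the set of supports $\{i:x^*_i>0\}$ of fixed points $x^*\in\mathbb R^n_{\ge0}$. $G$ is a stable motif if $[n]\in\operatorname{FP}(W)$ and all eigenvalues of $I-W$ have positive real part. *)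

(* Defs.v *)
From HB Require Import structures.
From mathcomp Require Import all_boot all_order all_algebra all_fingroup.
From mathcomp Require Import complex.
Set Implicit Arguments. Unset Strict Implicit. Unset Printing Implicit Defensive.
Import Order.TTheory GRing.Theory Num.Theory.
Local Open Scope ring_scope.

(* A simple directed graph on nodes 'I_n: G u v means the edge u -> v.
   Simple = no self loops. *)
Definition simple_digraph (n : nat) (G : rel 'I_n) : Prop :=
  forall i, ~~ G i i.

Definition directed_clique (n : nat) (G : rel 'I_n) : Prop :=
  exists s : {perm 'I_n}, forall u v : 'I_n, (s u < s v)%N -> G u v.

Definition is_clique (n : nat) (G : rel 'I_n) (sigma : {set 'I_n}) : Prop :=
  forall i j, i \in sigma -> j \in sigma -> i != j -> G i j && G j i.

Definition is_target (n : nat) (G : rel 'I_n) (sigma : {set 'I_n}) (k : 'I_n) : Prop :=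
  k \notin sigma /\ forall i, i \in sigma -> G i k.

Definition target_free (n : nat) (G : rel 'I_n) (sigma : {set 'I_n}) : Prop :=
  forall k, ~ is_target G sigma k.

Definition legal_params (R : realFieldType) (eps delta : R) : Prop :=
  0 < delta /\ 0 < eps /\ eps < delta / (delta + 1).

Definition ctln (R : pzRingType) (n : nat) (G : rel 'I_n) (eps delta : R) : 'M[R]_n :=
  \matrix_(i, j) (if i == j then 0
                  else if G j i then -1 + eps else -1 - delta).

Definition submx_on (R : Type) (n : nat) (A : 'M[R]_n) (sigma : {set 'I_n}) :
    'M[R]_#|sigma| :=
  \matrix_(i, j) A (enum_val i) (enum_val j).

Definition cramer_mx (R : Type) (m : nat) (M : 'M[R]_m) (theta : R) (k : 'I_m) : 'M[R]_m :=
  \matrix_(i, j) (if j == k then theta else M i j).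

Definition ctln_nondegenerate (R : comPzRingType) (n : nat) (W : 'M[R]_n) (theta : R) : Prop :=
  forall sigma : {set 'I_n},
    \det (1%:M - submx_on W sigma) != 0 /\
    forall k, \det (cramer_mx (1%:M - submx_on W sigma) theta k) != 0.

Definition relu (R : realDomainType) (y : R) : R := Num.max y 0.

(* x is a fixed point of dx_i/dt = -x_i + [sum_j W_ij x_j + theta]_+ in R^n_{>=0}. *)
Definition is_fixed_point (R : realDomainType) (n : nat) (W : 'M[R]_n) (theta : R)
    (x : 'cV[R]_n) : Prop :=
  (forall i, 0 <= x i 0) /\
  forall i, x i 0 = relu ((W *m x) i 0 + theta).

Definition supp (R : realDomainType) (n : nat) (x : 'cV[R]_n) : {set 'I_n} :=
  [set i | 0 < x i 0].

Definition in_FP (R : realDomainType) (n : nat) (W : 'M[R]_n) (theta : R)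
    (sigma : {set 'I_n}) : Prop :=
  exists x : 'cV[R]_n, is_fixed_point W theta x /\ supp x = sigma.

Definition stable_motif (R : rcfType) (n : nat) (W : 'M[R]_n) (theta : R) : Prop :=
  in_FP W theta [set: 'I_n] /\
  forall z : R[i], eigenvalue (map_mx (real_complex R) (1%:M - W)) z -> 0 < Re z.

(* Main.v *)
Require Import Defs.
From HB Require Import structures.
From mathcomp Require Import all_boot all_order all_algebra all_fingroup.
From mathcomp Require Import complex.
From mathcomp Require Import zify ring lra.
Set Implicit Arguments. Unset Strict Implicit. Unset Printing Implicit Defensive.
Import Order.TTheory GRing.Theory Num.Theory.
Local Open Scope ring_scope.

Lemma greedy_claim n (G : rel 'I_n) (s : {perm 'I_n}) t : (t <= n)%N ->
  exists S : {set 'I_n}, (forall u, u \in S -> (n - t <= s u)%N) /\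
    (forall u, (n - t <= s u)%N ->
       (u \in S <-> forall i, i \in S -> (s u < s i)%N -> G i u)).
Proof.
elim: t => [|t IH] ht.
  exists set0; split=> [u|u]; first by rewrite inE.
  by rewrite subn0 => h; have := ltn_ord (s u); lia.
have [S [S1 S2]] := IH (ltnW ht).
have hp : (n - t.+1 < n)%N by lia.
set k := (s^-1)%g (Ordinal hp).
have sk : s k = Ordinal hp by rewrite /k permKV.
have sk' : nat_of_ord (s k) = (n - t.+1)%N by rewrite sk.
set b := [forall i in S, G i k].
exists (if b then k |: S else S); split.
  move=> u; case: b; rewrite ?inE; last by move/S1; lia.
  by case/orP => [/eqP -> | /S1]; lia.
move=> u hu.
have inS' : forall i, i \in (if b then k |: S else S) -> i = k \/ i \in S.
  by move=> i; case: b; rewrite ?inE; [case/orP => [/eqP|]|]; auto.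
have [uk | ukn] := eqVneq u k.
  subst u.
  have kS : k \notin S by apply/negP => /S1; lia.
  split.
    move=> hk i /inS' [-> | iS]; first by rewrite ltnn.
    move=> _; move: hk; rewrite /b; case: ifP; last by rewrite (negbTE kS).
    by move/forallP/(_ i)/implyP/(_ iS).
  move=> H; rewrite /b; case: ifP => hb; first by rewrite setU11.
  exfalso; move/negbT: hb => /negP; apply; apply/forallP => i; apply/implyP => iS.
  apply: H; first by case: (b) => //; rewrite inE iS orbT.
  by have := S1 _ iS; rewrite sk'; have := S1 _ iS; lia.
have hu' : (n - t <= s u)%N.
  have : nat_of_ord (s u) != nat_of_ord (s k).
    by apply/negP => /eqP/val_inj/perm_inj/eqP; rewrite (negbTE ukn).
  rewrite sk'; lia.
have -> : (u \in (if b then k |: S else S)) = (u \in S).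
  by case: (b); rewrite ?inE ?(negbTE ukn).
rewrite S2 //; split=> H i.
  move=> /inS' [-> | iS]; last exact: H.
  by rewrite sk'; lia.
move=> iS; apply: H; by case: (b); rewrite ?inE ?iS ?orbT.
Qed.

Lemma reluP (R : realDomainType) (y : R) : (0 < y /\ relu y = y) \/ (y <= 0 /\ relu y = 0).
Proof. rewrite /relu; case: (ltrP 0 y) => h; [left | right]; split => //.
Qed.

Lemma Wentry (R : pzRingType) n (G : rel 'I_n) (eps delta : R) i j :
  ctln G eps delta i j = if i == j then 0 else if G j i then -1 + eps else -1 - delta.
Proof. by rewrite mxE. Qed.

Lemma fpE (R : realDomainType) n (W : 'M[R]_n) theta x :
  is_fixed_point W theta x -> forall i, x i 0 = relu (\sum_j W i j * x j 0 + theta).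
Proof. by case=> _ h i; rewrite h mxE. Qed.

Lemma W_le (R : realFieldType) n (G : rel 'I_n) (eps delta : R) i j :
  legal_params eps delta -> i != j -> ctln G eps delta i j <= -1 + eps.
Proof. case=> hd [he _] ij; rewrite Wentry (negbTE ij); case: ifP => _; lra. Qed.

Lemma W_ge (R : realFieldType) n (G : rel 'I_n) (eps delta : R) i j :
  legal_params eps delta -> i != j -> -1 - delta <= ctln G eps delta i j.
Proof. case=> hd [he _] ij; rewrite Wentry (negbTE ij); case: ifP => _; lra. Qed.

Lemma fp_pos (R : realDomainType) n (W : 'M[R]_n) theta x i :
  is_fixed_point W theta x -> 0 < x i 0 -> x i 0 = \sum_j W i j * x j 0 + theta.
Proof.
move=> fp hx; have e := fpE fp i; case: (reluP (\sum_j W i j * x j 0 + theta)) => [[_ h]|[_ h]].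
  by rewrite e h. by move: hx; rewrite e h ltxx.
Qed.

Lemma fp_zero (R : realDomainType) n (W : 'M[R]_n) theta x i :
  is_fixed_point W theta x -> x i 0 = 0 -> \sum_j W i j * x j 0 + theta <= 0.
Proof.
move=> fp hx; have e := fpE fp i; case: (reluP (\sum_j W i j * x j 0 + theta)) => [[h1 h]|[h1 h]] //.
by move: hx; rewrite e h => h2; move: h1; rewrite h2 ltxx.
Qed.

Lemma target_rule (R : realFieldType) n (G : rel 'I_n) (eps delta theta : R) x k :
  legal_params eps delta -> 0 < theta ->
  is_fixed_point (ctln G eps delta) theta x -> x k 0 = 0 ->
  (forall i, 0 < x i 0 -> G i k) -> False.
Proof.
move=> lp ht fp hk hT.
have [hd [he _]] := lp.
have x0 : forall l, 0 <= x l 0 by case: fp.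
have yk := fp_zero fp hk.
case: (boolP [exists j, 0 < x j 0]) => [/existsP [j hj] | /existsPn hn].
  have jk : j != k by apply/negP => /eqP e; move: hj; rewrite e hk ltxx.
  have yj := fp_pos fp hj.
  have key : \sum_l (if l == j then (-1 + eps) * x j 0 else 0) <=
       \sum_l (ctln G eps delta k l * x l 0 - ctln G eps delta j l * x l 0).
    apply: ler_sum => l _; case: eqVneq => [-> | lj].
      have kj : k != j by rewrite eq_sym.
      by rewrite !Wentry eqxx (negbTE kj) (hT _ hj) mul0r subr0.
    have [xl0 | xlp] := eqVneq (x l 0) 0; first by rewrite xl0 !mulr0 subrr.
    have xlp' : 0 < x l 0 by rewrite lt_def xlp x0.
    have lk : l != k by apply/negP => /eqP e; move: xlp; rewrite e hk eqxx.
    rewrite -mulrBl mulr_ge0 // ?x0 // subr_ge0.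
    have kl : k != l by rewrite eq_sym.
    have -> : ctln G eps delta k l = -1 + eps by rewrite Wentry (negbTE kl) hT.
    by apply: W_le => //; rewrite eq_sym.
  move: key; rewrite -big_mkcond big_pred1_eq sumrB => key.
  have : 0 < eps * x j 0 by rewrite mulr_gt0.
  lra.
have xz : forall l, x l 0 = 0.
  by move=> l; apply/eqP; rewrite eq_le x0 andbT leNgt hn.
move: yk; rewrite big1 ?add0r => [|l _]; last by rewrite xz mulr0.
lra.
Qed.
Lemma domination (R : realFieldType) n (G : rel 'I_n) (eps delta theta : R) x u i :
  legal_params eps delta ->
  is_fixed_point (ctln G eps delta) theta x -> 0 < x u 0 -> 0 < x i 0 ->
  G u i -> ~~ G i u ->
  (forall l, 0 < x l 0 -> l != u -> l != i -> G l u -> G l i) -> False.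
Proof.
move=> lp fp hu hi Gui Giu hl.
have [hd [he _]] := lp.
have x0 : forall l, 0 <= x l 0 by case: fp.
have ui : u != i by move: Gui Giu; case: eqVneq => // -> ->.
have iu : i != u by rewrite eq_sym.
have key : \sum_l (if l == u then (-1 + eps) * x u 0 else if l == i then (1 + delta) * x i 0 else 0) <=
       \sum_l (ctln G eps delta i l * x l 0 - ctln G eps delta u l * x l 0).
  apply: ler_sum => l _; case: eqVneq => [-> | lu].
    by rewrite !Wentry eqxx (negbTE iu) Gui mul0r subr0.
  case: eqVneq => [-> | li].
    rewrite !Wentry eqxx (negbTE ui) (negbTE Giu) mul0r; lra.
  have [xl0 | xlp] := eqVneq (x l 0) 0; first by rewrite xl0 !mulr0 subrr.
  have xlp' : 0 < x l 0 by rewrite lt_def xlp x0.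
  rewrite -mulrBl mulr_ge0 // ?x0 // subr_ge0.
  have il : i != l by rewrite eq_sym.
  have ul : u != l by rewrite eq_sym.
  case: (boolP (G l u)) => Glu.
    by rewrite !Wentry (negbTE il) (negbTE ul) Glu (hl _ xlp' lu li Glu).
  rewrite [X in X <= _]Wentry (negbTE ul) (negbTE Glu).
  by apply: W_ge.
move: key; rewrite (bigD1 u) //= eqxx (bigD1 i) //= eqxx (negbTE iu) big1 => [|l /andP [li lu]]; last first.
  by rewrite (negbTE li) (negbTE lu).
rewrite sumrB addr0 => key.
have e1 := fp_pos fp hu; have e2 := fp_pos fp hi.
have : 0 < eps * x u 0 by rewrite mulr_gt0.
have : 0 < delta * x i 0 by rewrite mulr_gt0.
lra.
Qed.

Lemma greedy_exists n (G : rel 'I_n) (s : {perm 'I_n}) :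
  exists S : {set 'I_n}, forall u, u \in S <-> (forall i, i \in S -> (s u < s i)%N -> G i u).
Proof.
have [S [_ H]] := greedy_claim G s (leqnn n).
by exists S => u; apply: H; rewrite subnn.
Qed.

Lemma s_neq n (s : {perm 'I_n}) (u v : 'I_n) : u != v -> nat_of_ord (s u) != s v.
Proof. by move=> uv; apply/negP => /eqP/val_inj/perm_inj/eqP; rewrite (negbTE uv). Qed.

Lemma greedy_ctf n (G : rel 'I_n) (s : {perm 'I_n}) (hs : forall u v, (s u < s v)%N -> G u v)
  (S : {set 'I_n}) :
  (forall u, u \in S <-> (forall i, i \in S -> (s u < s i)%N -> G i u)) ->
  is_clique G S /\ target_free G S.
Proof.
move=> hS; split.
  move=> i j iS jS ij; have := s_neq s ij.
  case: (ltngtP (s i) (s j)) => // h _.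
    by rewrite hs //=; apply: (proj1 (hS i) iS).
  by rewrite (hs j i) // andbT; apply: (proj1 (hS j) jS).
move=> k [kS hk]; move/negP: kS; apply; apply/hS => i iS _; exact: hk.
Qed.

Lemma ctf_unique_aux n (G : rel 'I_n) (s : {perm 'I_n}) (hs : forall u v, (s u < s v)%N -> G u v)
  (S T : {set 'I_n}) u :
  is_clique G S /\ target_free G S -> is_clique G T /\ target_free G T ->
  u \in S -> u \notin T -> (forall j, (s u < s j)%N -> (j \in S) = (j \in T)) -> False.
Proof.
move=> [cS tS] [cT tT] uS uT hj.
case: (boolP [forall i in T, G i u]) => [/forallP H | H].
  apply: (tT u); split => // i iT; exact: (implyP (H i) iT).
move/forallPn: H => [w].
rewrite negb_imply => /andP [iT Giu].
move: w iT Giu => i iT Giu.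
have iu : i != u by apply/negP => /eqP e; move: iT; rewrite e (negbTE uT).
have := s_neq s iu; case: (ltngtP (s i) (s u)) => // h _.
  by move: Giu; rewrite hs.
have iS : i \in S by rewrite hj.
by move: Giu; have /andP [-> _] := cS i u iS uS iu.
Qed.

Lemma ctf_unique n (G : rel 'I_n) (s : {perm 'I_n}) (hs : forall u v, (s u < s v)%N -> G u v)
  (S T : {set 'I_n}) :
  is_clique G S /\ target_free G S -> is_clique G T /\ target_free G T -> S = T.
Proof.
move=> hS hT; apply/setP => u0; apply/idP/idP => h0; apply/negPn/negP => h1.
- pose P := [pred u | (u \in S) != (u \in T)].
  have P0 : P u0 by rewrite /P /= h0 (negbTE h1).
  case: (arg_maxnP (fun u => nat_of_ord (s u)) P0) => u Pu umax.
  have hj : forall j, (s u < s j)%N -> (j \in S) = (j \in T).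
    move=> j hj; case: (boolP (P j)) => [Pj|]; first by have := umax j Pj; lia.
    by rewrite /P /= negbK => /eqP.
  move: Pu; rewrite /P /=; case: (boolP (u \in S)) => uS; case: (boolP (u \in T)) => uT // _.
    exact: (ctf_unique_aux hs hS hT uS uT hj).
  by apply: (ctf_unique_aux hs hT hS uT uS) => j /hj ->.
- pose P := [pred u | (u \in S) != (u \in T)].
  have P0 : P u0 by rewrite /P /= h0 (negbTE h1).
  case: (arg_maxnP (fun u => nat_of_ord (s u)) P0) => u Pu umax.
  have hj : forall j, (s u < s j)%N -> (j \in S) = (j \in T).
    move=> j hj; case: (boolP (P j)) => [Pj|]; first by have := umax j Pj; lia.
    by rewrite /P /= negbK => /eqP.
  move: Pu; rewrite /P /=; case: (boolP (u \in S)) => uS; case: (boolP (u \in T)) => uT // _.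
    exact: (ctf_unique_aux hs hS hT uS uT hj).
  by apply: (ctf_unique_aux hs hT hS uT uS) => j /hj ->.
Qed.

Lemma supp_zero (R : realDomainType) n (x : 'cV[R]_n) k :
  (forall l, 0 <= x l 0) -> k \notin supp x -> x k 0 = 0.
Proof.
move=> x0; rewrite /supp inE => h; apply/eqP; rewrite eq_le x0 andbT.
by rewrite leNgt.
Qed.

Lemma fp_tf (R : realFieldType) n (G : rel 'I_n) (eps delta theta : R) T :
  legal_params eps delta -> 0 < theta ->
  in_FP (ctln G eps delta) theta T -> target_free G T.
Proof.
move=> lp ht [x [fp <-]] k [kT hk].
have x0 : forall l, 0 <= x l 0 by case: fp.
apply: (target_rule lp ht fp (supp_zero x0 kT)) => i hi.
by apply: hk; rewrite /supp inE.
Qed.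

Lemma fp_clique (R : realFieldType) n (G : rel 'I_n) (s : {perm 'I_n})
  (hs : forall u v, (s u < s v)%N -> G u v) (eps delta theta : R) T :
  legal_params eps delta ->
  in_FP (ctln G eps delta) theta T -> is_clique G T.
Proof.
move=> lp [x [fp <-]] a b; rewrite /supp !inE => ha hb ab.
apply/negP => /negP hab.
pose P := [pred w | (0 < x w 0) && [exists u, (0 < x u 0) && (s u < s w)%N && ~~ G w u]].
have Pgen : forall a b, 0 < x a 0 -> 0 < x b 0 -> (s a < s b)%N -> ~~ G b a -> P b.
  move=> a' b' ha' hb' hab' G'; rewrite /P /= hb' /=; apply/existsP; exists a'.
  by rewrite ha' hab' G'.
have P0 : exists w, P w.
  have := s_neq s ab; case: (ltngtP (s a) (s b)) => // h _.
    by exists b; apply: (Pgen a) => //; move: hab; rewrite hs.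
  by exists a; apply: (Pgen b) => //; move: hab; rewrite (hs b a) // andbT.
case: P0 => w0 Pw0.
case: (arg_maxnP (fun u => nat_of_ord (s u)) Pw0) => i /andP [hi /existsP [u /andP [/andP [hu sui] Giu]]] imax.
apply: (domination lp fp hu hi (hs _ _ sui) Giu) => l hl lu li Glu.
have := s_neq s li; case: (ltngtP (s l) (s i)) => // h _; first exact: hs.
apply/negPn/negP => Gli.
by move: (imax l (Pgen i l hi hl h Gli)); rewrite /= leqNgt h.
Qed.

Lemma ctf_fp (R : realFieldType) n (G : rel 'I_n) (eps delta theta : R) sigma :
  legal_params eps delta -> 0 < theta ->
  is_clique G sigma -> target_free G sigma -> in_FP (ctln G eps delta) theta sigma.
Proof.
move=> lp ht cS tS.
have [hd [he hed]] := lp.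
have e1 : eps < 1.
  have : delta / (delta + 1) < 1 by rewrite ltr_pdivrMr ?mul1r; lra.
  lra.
case: (set_0Vmem sigma) => [s0 | [u0 u0S]].
  have nk : forall k : 'I_n, False.
    by move=> k; apply: (tS k); split; rewrite s0 ?inE // => i; rewrite inE.
  exists 0; split; first by split => i; case: (nk i).
  by apply/setP => i; case: (nk i).
set m := #|sigma|.
have m1 : (1 <= m)%N by rewrite /m card_gt0; apply/set0Pn; exists u0.
set M : R := m%:R.
have M1 : 1 <= M by rewrite /M ler1n.
set D := 1 + (1 - eps) * (M - 1).
have D0 : 0 < D.
  rewrite /D; have : 0 <= (1 - eps) * (M - 1) by rewrite mulr_ge0 //; lra.
  lra.
set c := theta / D.
have c0 : 0 < c by rewrite /c divr_gt0.
have cD : c * D = theta by rewrite /c mulfVK // gt_eqF.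
set x : 'cV[R]_n := \matrix_(i, j) (if i \in sigma then c else 0).
have xE : forall i, x i 0 = if i \in sigma then c else 0 by move=> i; rewrite mxE.
set g := (-1 + eps) * c.
have sumE : forall u, \sum_j ctln G eps delta u j * x j 0 = \sum_(j in sigma) ctln G eps delta u j * c.
  move=> u; rewrite [RHS]big_mkcond; apply: eq_bigr => j _; rewrite xE.
  by case: (j \in sigma); rewrite ?mulr0.
have sumg : forall u, u \in sigma -> \sum_(j in sigma | j != u) g = g * M - g.
  move=> u uS; have h : \sum_(j in sigma) g = g *+ m by rewrite sumr_const.
  rewrite (bigD1 u) //= in h.
  apply: (addrI g); rewrite h mulr_natr /M addrC subrK //.
have yin : forall u, u \in sigma -> \sum_j ctln G eps delta u j * x j 0 + theta = c.
  move=> u uS; rewrite sumE (bigD1 u) //= Wentry eqxx mul0r add0r.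
  rewrite (eq_bigr (fun _ => g)) => [|j /andP [jS ju]].
    rewrite sumg // -cD /g /D; ring.
  have uj : u != j by rewrite eq_sym.
  by rewrite Wentry (negbTE uj) (proj2 (andP (cS _ _ uS jS uj))).
have yout : forall u, u \notin sigma -> \sum_j ctln G eps delta u j * x j 0 + theta < 0.
  move=> u uS.
  have [i iS Giu] : exists2 i, i \in sigma & ~~ G i u.
    case: (boolP [forall i in sigma, G i u]) => [/forallP H | H].
      by case: (tS u); split => // i iS; exact: (implyP (H i) iS).
    move/forallPn: H => [w]; rewrite negb_imply => /andP [wS Gw].
    by exists w.
  have ui : u != i by apply/negP => /eqP e; move: uS; rewrite e iS.
  rewrite sumE (bigD1 i) //= Wentry (negbTE ui) (negbTE Giu).
  have h : \sum_(j in sigma | j != i) ctln G eps delta u j * c <= g * M - g.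
    rewrite -(sumg i iS); apply: ler_sum => j /andP [jS ji]; rewrite /g ler_pM2r //.
    by apply: W_le => //; apply/negP => /eqP e; move: uS; rewrite e jS.
  have : 0 < delta * c by rewrite mulr_gt0.
  have eq : (-1 - delta) * c + (g * M - g) + c * D = - (delta * c) by rewrite /g /D; ring.
  move: h eq; rewrite -cD.
  set S := \sum_(j in sigma | j != i) _.
  set A := g * M - g. set B := c * D. set E := delta * c. lra.
exists x; split.
  split => i; rewrite xE.
    by case: (i \in sigma) => //; apply: ltW.
  case: (boolP (i \in sigma)) => iS.
    by rewrite mxE yin // /relu max_l // ltW.
  by rewrite mxE /relu max_r // ltW // yout.
apply/setP => i; rewrite /supp inE xE; case: (i \in sigma) => //.
Qed.

Lemma eps_lt1 (R : realFieldType) (eps delta : R) : legal_params eps delta -> eps < 1.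
Proof.
case=> hd [he hed].
have : delta / (delta + 1) < 1 by rewrite ltr_pdivrMr ?mul1r; lra.
lra.
Qed.

Lemma clique_eig (R : rcfType) n (G : rel 'I_n) (eps delta : R) z :
  legal_params eps delta -> is_clique G [set: 'I_n] ->
  eigenvalue (map_mx (real_complex R) (1%:M - ctln G eps delta)) z -> 0 < Re z.
Proof.
move=> lp hc /eigenvalueP [v hv vn0].
have [hd [he _]] := lp.
have e1 := eps_lt1 lp.
set a : R[i] := real_complex R (1 - eps); set e : R[i] := real_complex R eps.
set A := map_mx _ _ in hv.
have AE : forall i j, A i j = a + e * (i == j)%:R.
  move=> p q; rewrite !mxE; have [_|pq] := eqVneq p q.
    by rewrite mulr1 subr0 /a /e -rmorphD /= subrK.
  have qp : q != p by rewrite eq_sym.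
  rewrite (proj1 (andP (hc q p (in_setT _) (in_setT _) qp))).
  by rewrite mulr0 addr0 sub0r opprD opprK.
set s := \sum_i v 0 i.
have hj : forall j, z * v 0 j = s * a + v 0 j * e.
  move=> j; have := hv; move/matrixP => /(_ 0 j); rewrite !mxE => <-.
  rewrite (eq_bigr (fun i => v 0 i * a + (v 0 i * e) * (i == j)%:R)); last first.
    by move=> i _; rewrite AE mulrDr mulrA.
  rewrite big_split /= -mulr_suml; congr (_ + _).
  rewrite (bigD1 j) //= eqxx mulr1 big1 ?addr0 // => i ij.
  by rewrite (negbTE ij) mulr0.
have hs : z * s = s * (a *+ n + e).
  rewrite /s mulr_sumr (eq_bigr _ (fun j _ => hj j)) big_split /= sumr_const card_ord.
  by rewrite -mulr_suml mulrDr mulrnAr.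
have [s0 | sn0] := eqVneq s 0.
  have [j vj] : exists j, v 0 j != 0.
    apply/existsP; move: vn0; apply: contraR => /existsPn H.
    by apply/eqP/rowP => j; rewrite !mxE; apply/eqP; move: (H j); rewrite negbK.
  have := hj j; rewrite s0 mul0r add0r [RHS]mulrC => /(mulIf vj) ->.
  by rewrite /e -complexRe ltcE /= eqxx.
have -> : z = a *+ n + e by apply: (mulIf sn0); rewrite hs mulrC.
rewrite /a /e -rmorphMn -rmorphD -complexRe ltcE /= eqxx /=.
have : 0 <= (1 - eps) *+ n by rewrite mulrn_wge0 // subr_ge0 ltW.
lra.
Qed.

Unset Implicit Arguments.

Theorem proposition1 (R : rcfType) (n : nat) (G : rel 'I_n)
    (eps delta theta : R) :
  simple_digraph G ->
  directed_clique G ->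
  legal_params eps delta ->
  0 < theta ->
  ctln_nondegenerate (ctln G eps delta) theta ->
  (exists sigma : {set 'I_n},
      (is_clique G sigma /\ target_free G sigma) /\
      (forall tau : {set 'I_n}, is_clique G tau /\ target_free G tau -> tau = sigma) /\
      (forall tau : {set 'I_n}, in_FP (ctln G eps delta) theta tau <-> tau = sigma)) /\
  (stable_motif (ctln G eps delta) theta <-> is_clique G [set: 'I_n]).
Proof.
move=> _ [s hs] lp ht _.
have [S hS] := greedy_exists G s.
have [cS tS] := greedy_ctf hs hS.
have FP : forall tau, in_FP (ctln G eps delta) theta tau <-> tau = S.
  move=> tau; split => [h | ->]; last exact: ctf_fp.
  exact: (ctf_unique hs (conj (fp_clique hs lp h) (fp_tf lp ht h)) (conj cS tS)).
split.
  exists S; split; first by split.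
  split => // tau htau; exact: (ctf_unique hs htau (conj cS tS)).
split.
  by case=> h _; move/FP: h => ->.
move=> hc.
have tT : target_free G [set: 'I_n] by move=> k [kT _]; rewrite in_setT in kT.
split.
  by apply/FP; apply: (ctf_unique hs (conj hc tT) (conj cS tS)).
move=> z; exact: clique_eig lp hc.
Qed.
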